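(* For all integers $n \geq k \geq 1$ there exists an oriented graph on $n$ vertices with exactly $k$ weak kings.
   Context: An oriented graph is a digraph with no loops and no pair of symmetric arcs. For vertices $u,v$ write $u(1\text{-}0)v$ if there is an arc from $u$ to $v$, and $u(0\text{-}0)v$ if there is no arc between $u$ and $v$. A vertex $v$ is weakly reachable within two steps from $u$ if $u(1\text{-}0)v$, or $u(0\text{-}0)v$, or for some vertex $w$ one has $u(1\text{-}0)w(1\text{-}0)v$, or $u(1\text{-}0)w(0\text{-}0)v$, or $u(0\text{-}0)w(1\text{-}0)v$. A vertex $u$ of an oriented graph $D$ is a weak king if every other vertex of $D$ is weakly reachable within two steps from $u$. *)

(* Defs.v *)
From mathcomp Require Import all_boot.
Set Implicit Arguments. Unset Strict Implicit. Unset Printing Implicit Defensive.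

Definition oriented (n : nat) (arc : rel 'I_n) : Prop :=
  (forall u, ~~ arc u u) /\ (forall u v, arc u v -> ~~ arc v u).

Definition arc10 (n : nat) (arc : rel 'I_n) (u v : 'I_n) : bool := arc u v.
Definition arc00 (n : nat) (arc : rel 'I_n) (u v : 'I_n) : bool :=
  ~~ arc u v && ~~ arc v u.

Definition weakly_reach2 (n : nat) (arc : rel 'I_n) (u v : 'I_n) : bool :=
  [|| arc10 arc u v, arc00 arc u v
    | [exists w, [|| arc10 arc u w && arc10 arc w v,
                     arc10 arc u w && arc00 arc w v
                   | arc00 arc u w && arc10 arc w v]]].

Definition weak_king (n : nat) (arc : rel 'I_n) (u : 'I_n) : bool :=
  [forall v, (v != u) ==> weakly_reach2 arc u v].

(* Main.v *)
Require Import Defs.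
From mathcomp Require Import all_boot.

Theorem theorem7 (n k : nat) (hk : 1 <= k) (hkn : k <= n) :
  exists arc : rel 'I_n, oriented arc /\ #|[set u | weak_king arc u]| = k.
Proof.
exists (fun u v : 'I_n => (u < k) && (k <= v)).
split.
  split=> [u|u v] /=; first by case: (ltnP u k).
  case/andP=> h1 h2; apply/negP=> /andP[h3 h4].
  by move: (leq_ltn_trans h2 h3); rewrite ltnn.
have -> : [set u | weak_king (fun u v : 'I_n => (u < k) && (k <= v)) u]
          = [set widen_ord hkn i | i : 'I_k].
  apply/setP=> u; rewrite !inE.
  have -> : (u \in [set widen_ord hkn i | i : 'I_k]) = (u < k).
    apply/imsetP/idP.
      by case=> i _ ->; rewrite /= ltn_ord.
    by move=> h; exists (Ordinal h) => //; apply: val_inj.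
  case: (ltnP u k) => hu.
    apply/forallP=> v; apply/implyP=> _.
    rewrite /weakly_reach2 /arc10 /arc00 hu /=.
    by case: (ltnP v k) => hv //=; rewrite -ltnNge hu.
  rewrite /weak_king; apply/negbTE/negP=> /forallP H; move: (H (Ordinal (leq_trans hk hkn))) => /implyP.
  have hne : Ordinal (leq_trans hk hkn) != u.
    by apply/negP=> /eqP/(f_equal val) /= h; move: hu; rewrite -h leqNgt hk.
  move=> /(_ hne).
  rewrite /weakly_reach2 /arc10 /arc00 /= hk hu /= ltnNge hu /=.
  by case/existsP=> w; rewrite leqn0 (negbTE (lt0n_neq0 hk)) !andbF.
rewrite card_imset ?card_ord //.
by move=> i j /(f_equal val) /= h; apply: val_inj.
Qed.
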